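(* Let $\rho$ be a density matrix on $\mathcal F$ (positive, trace one) that commutes with the particle number operator $\hat{\mathbb N}=\sum_{i=1}^n c_i^*c_i$, where $c_i=c(\varphi_i)$. Define the numbers $\gamma_{ij}\doteq\operatorname{tr}(\rho\,c_j^*c_i)$ for $i,j\in\mathbb N_n$, and put $\operatorname{tr}\gamma=\sum_i\gamma_{ii}$ and $d\Gamma(\gamma)=\sum_{i,j}\gamma_{ij}c_i^*c_j$. Let $\pi_1$ be the orthogonal projection in $\mathcal L^2(\mathcal F)$ onto $\mathcal O_1$. Then $$2^n\pi_1(\rho)=(n+1-2\operatorname{tr}\gamma)\mathbb 1-2\hat{\mathbb N}+4\,d\Gamma(\gamma).$$
   Context: Let $\mathfrak h$ be a complex Hilbert space of finite dimension $n$ with orthonormal basis $\varphi_1,\dots,\varphi_n$, and $\mathbb N_n=\{1,\dots,n\}$. $\mathcal F=\bigoplus_{k=0}^n\bigwedge^k\mathfrak h$ is the fermion Fock space with the determinant inner product. The creation operators are $c^*(f)\omega=f\wedge\omega$, and $c(f)=c^*(f)^*$. $\mathcal L^2(\mathcal F)$ is the space of all linear operators on $\mathcal F$ with inner product $\langle a,b\rangle=\operatorname{tr}(a^*b)$. For $\omega\in\mathcal F$ let $\mathbf c^*(\omega)\xi=\omega\wedge\xi$ and $\mathbf c(\omega)=\mathbf c^*(\omega)^*$. The space $\mathcal O_1$ of one-body operators is the linear span of the operators $\mathbf c^*(\omega)\mathbf c(\eta)$ with $\omega\in\bigwedge^r\mathfrak h$, $\eta\in\bigwedge^s\mathfrak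 h$ and $r+s\in\{0,2\}$. Equivalently, it is the span of $\mathbb 1$, $c_i^*c_j$, $c_i^*c_j^*$ and $c_ic_j$ for $i,j\in\mathbb N_n$. *)

(* Defs.v *)
(* Concrete model of the fermion Fock space over h = C^n
   (orthonormal basis phi_1..phi_n, indexed here by 'I_n), using the basis
   e_S = phi_{s_1} /\ ... /\ phi_{s_k} (s_1 < ... < s_k), S : {set 'I_n}. *)
From HB Require Import structures.
From mathcomp Require Import all_boot all_order all_algebra.
Set Implicit Arguments. Unset Strict Implicit. Unset Printing Implicit Defensive.
Import Order.TTheory GRing.Theory Num.Theory.
Local Open Scope ring_scope.

Section Fock.
Variable C : numClosedFieldType.
Variable n : nat.

Definition fdim := #|{set 'I_n}|.

Definition lbl (r : 'I_fdim) : {set 'I_n} := enum_val r.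

Definition op := 'M[C]_fdim.

Definition adjm (p q : nat) (A : 'M[C]_(p, q)) : 'M[C]_(q, p) :=
  \matrix_(i, j) (A j i)^*.

(* creation operator c_i^* = c^*(phi_i):  phi_i /\ e_S =
   (-1)^{#{j in S | j < i}} e_{S u {i}} if i \notin S, and 0 otherwise. *)
Definition cre (i : 'I_n) : op :=
  \matrix_(r, s)
    (if (i \notin lbl s) && (lbl r == ([set i] :|: lbl s))
     then (-1) ^+ #|[set j in lbl s | (j < i)%N]| else 0).

Definition ann (i : 'I_n) : op := adjm (cre i).

Definition Nhat : op := \sum_(i < n) cre i *m ann i.

Definition hs (a b : op) : C := \tr (adjm a *m b).

Definition inO1 (X : op) : Prop :=
  exists (a : C) (B D E : 'M[C]_n),
    X = a *: 1%:M
        + \sum_(i < n) \sum_(j < n) B i j *: (cre i *m ann j)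
        + \sum_(i < n) \sum_(j < n) D i j *: (cre i *m cre j)
        + \sum_(i < n) \sum_(j < n) E i j *: (ann i *m ann j).

Definition is_orth_proj (S : op -> Prop) (a p : op) : Prop :=
  S p /\ forall b, S b -> hs b (a - p) = 0.

Definition positive_op (A : op) : Prop :=
  forall v : 'cV[C]_fdim, 0 <= (adjm v *m A *m v) 0 0.

Definition density (rho : op) : Prop := positive_op rho /\ \tr rho = 1.

Definition gam (rho : op) : 'M[C]_n :=
  \matrix_(i, j) \tr (rho *m (cre j *m ann i)).

Definition dGamma (g : 'M[C]_n) : op :=
  \sum_(i < n) \sum_(j < n) g i j *: (cre i *m ann j).

End Fock.

(* Main.v *)
Require Import Defs.
From HB Require Import structures.
From mathcomp Require Import all_boot all_order all_algebra.
From mathcomp Require Import ring zify.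
Set Implicit Arguments. Unset Strict Implicit. Unset Printing Implicit Defensive.
Import Order.TTheory GRing.Theory Num.Theory.
Local Open Scope ring_scope.

Section S.
Variable C : numClosedFieldType.
Variable n : nat.
Local Notation op := (op C n).
Local Notation fdim := (fdim n).
Local Notation lbl := (@lbl n).

Lemma sumS (F : {set 'I_n} -> C) : \sum_(r < fdim) F (lbl r) = \sum_S F S.
Proof. rewrite /lbl. by rewrite (big_enum_val (A := {set 'I_n})). Qed.

Lemma lbl_inj : injective lbl.
Proof. exact: enum_val_inj. Qed.

Lemma lbl_rank S : lbl (enum_rank S) = S.
Proof. exact: enum_rankK. Qed.

Definition sg (i : 'I_n) (S : {set 'I_n}) : C := (-1) ^+ #|[set j in S | (j < i)%N]|.

Lemma conj_sg i S : (sg i S)^* = sg i S.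
Proof. by rewrite /sg rmorphXn rmorphN1. Qed.

Lemma conj_sgM i j S T : (sg i S * sg j T)^* = sg i S * sg j T.
Proof. by rewrite /sg -exprD rmorphXn rmorphN1 exprD. Qed.

Lemma sg_sq i S : sg i S * sg i S = 1.
Proof. by rewrite /sg -exprMn mulrNN mulr1 expr1n. Qed.

Lemma creE i r s : cre C i r s =
  if (i \notin lbl s) && (lbl r == i |: lbl s) then sg i (lbl s) else 0.
Proof. by rewrite mxE. Qed.

Lemma annE i r s : ann C i r s =
  if (i \notin lbl r) && (lbl s == i |: lbl r) then sg i (lbl r) else 0.
Proof. by rewrite !mxE; case: ifP => _; rewrite ?conj_sg ?rmorph0. Qed.

Lemma creannE k l r s : (cre C k *m ann C l) r s =
  if (l \in lbl s) && (k \notin lbl s :\ l) && (lbl r == k |: (lbl s :\ l))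
  then sg k (lbl s :\ l) * sg l (lbl s :\ l) else 0.
Proof.
rewrite mxE (bigD1 (enum_rank (lbl s :\ l))) //= big1 ?addr0; last first.
  move=> t ht; rewrite annE; case: ifP; last by rewrite mulr0.
  case/andP=> hl /eqP hs; case/eqP: ht; apply: lbl_inj.
  by rewrite lbl_rank hs setU1K.
rewrite creE annE lbl_rank setD11 /=.
case hl: (l \in lbl s).
  rewrite setD1K // eqxx /=.
  by case: ifP => _; rewrite ?mul0r.
have -> : (lbl s == l |: lbl s :\ l) = false.
  by apply/negbTE/eqP => E; move: hl; rewrite E setU11.
by rewrite mulr0.
Qed.

Lemma condE (i j k l : 'I_n) (S : {set 'I_n}) : j \in S -> i \notin S :\ j ->
  l \in S -> k \notin S :\ l ->
  (i |: (S :\ j) == k |: (S :\ l)) = ((i == k) && (j == l)) || ((i == j) && (k == l)).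
Proof.
move=> hj hi hl hk.
have [eij|nij] := eqVneq i j.
  subst j; rewrite setD1K // andbC orbC /=.
  have [ekl|nkl] := eqVneq k l; first by subst k; rewrite setD1K // eqxx.
  have -> : (i == l) && (i == k) = false.
    by apply/negbTE/andP => [[/eqP a /eqP b]]; subst; rewrite eqxx in nkl.
  rewrite orbF; apply/negbTE/eqP => E.
  by move: hl; rewrite E !inE eq_sym (negbTE nkl) eqxx.
rewrite /= orbF.
have [eik|nik] := eqVneq i k; have [ejl|njl] := eqVneq j l => //=.
- by rewrite eik ejl eqxx.
- subst k; apply/negbTE/eqP => E.
  have : j \in i |: S :\ j by rewrite E !inE njl hj andbT orbT.
  by rewrite !inE eqxx /= orbF eq_sym (negbTE nij).
- apply/negbTE/eqP => E.
  have := setU11 i (S :\ j); rewrite E !inE (negbTE nik) /=.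
  by move: hi; rewrite !inE (negbTE nij) /= => /negbTE ->; rewrite andbF.
- apply/negbTE/eqP => E.
  have := setU11 i (S :\ j); rewrite E !inE (negbTE nik) /=.
  by move: hi; rewrite !inE (negbTE nij) /= => /negbTE ->; rewrite andbF.
Qed.

Lemma hsE (X Y : op) : hs X Y = \sum_r \sum_s (X s r)^* * Y s r.
Proof.
rewrite /hs /mxtrace; apply eq_bigr => r _; rewrite mxE.
by apply eq_bigr => s _; rewrite mxE.
Qed.

Definition cnt (P : {set 'I_n} -> bool) : C := \sum_S (if P S then 1 else 0).

Lemma hs_AA i j k l : hs (cre C i *m ann C j) (cre C k *m ann C l) =
  cnt (fun S => [&& j \in S, i \notin S :\ j, l \in S, k \notin S :\ l &
      ((i == k) && (j == l)) || ((i == j) && (k == l))]).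
Proof.
rewrite /cnt hsE -sumS; apply eq_bigr => r _.
rewrite (bigD1 (enum_rank (k |: (lbl r :\ l)))) //= big1 ?addr0; last first.
  move=> s hs; rewrite [(cre C k *m ann C l) s r]creannE.
  case: ifP => [/andP[_ /eqP E]|]; last by rewrite mulr0.
  by case/eqP: hs; apply: lbl_inj; rewrite lbl_rank E.
rewrite creannE [(cre C k *m _) _ _]creannE lbl_rank eqxx andbT.
case hj: (j \in lbl r); case hi: (i \notin lbl r :\ j);
  case hl: (l \in lbl r); case hk: (k \notin lbl r :\ l);
  rewrite /= ?rmorph0 ?mul0r ?mulr0 //.
rewrite eq_sym (condE hj hi hl hk).
case: (boolP ((i == k) && (j == l))) => [/andP[/eqP eik /eqP ejl] | _] /=.
  subst; by rewrite conj_sgM mulrACA !sg_sq mulr1.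
case: (boolP ((i == j) && (k == l))) => [/andP[/eqP eik /eqP ejl] | _] /=.
  subst; by rewrite !sg_sq rmorph1 mulr1.
by rewrite rmorph0 mul0r.
Qed.

Lemma tr_A i j : \tr (cre C i *m ann C j) =
  \sum_(S : {set 'I_n}) (if (i == j) && (j \in S) then 1 else 0).
Proof.
rewrite /mxtrace -sumS; apply eq_bigr => r _.
rewrite creannE.
case hj: (j \in lbl r); case hi: (i \notin lbl r :\ j); rewrite /= ?andbF //.
  have -> : (lbl r == i |: lbl r :\ j) = (i == j).
    by rewrite -{1}(setD1K hj) eq_sym (condE hj hi hj (negbT (setD11 j (lbl r)))) eqxx andbT orbb.
  by case: (eqVneq i j) => [->|] /=; rewrite ?sg_sq.
have -> : i == j = false.
  by apply/negbTE; apply: contraFN hi => /eqP ->; rewrite setD11.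
by [].
Qed.

Lemma card_sets : #|{set 'I_n}| = (2 ^ n)%N.
Proof.
rewrite -cardsT.
have -> : [set: {set 'I_n}] = powerset [set: 'I_n].
  by apply/setP => S; rewrite !inE ?subsetT.
by rewrite card_powerset cardsT card_ord.
Qed.

Definition tog (i : 'I_n) (S : {set 'I_n}) := if i \in S then S :\ i else i |: S.

Lemma in_tog i j S : (j \in tog i S) = if j == i then i \notin S else j \in S.
Proof.
rewrite /tog; case: (eqVneq j i) => [->|nji].
  by case: ifP => h; rewrite ?setD11 ?setU11 ?h.
by case: ifP => _; rewrite !inE (negbTE nji).
Qed.

Lemma tog_inv i : involutive (tog i).
Proof.
move=> S; apply/setP => j; rewrite !in_tog.
case: (eqVneq j i) => [->|]; last by [].
by rewrite eqxx negbK.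
Qed.

Lemma tog_inj i : injective (tog i).
Proof. exact: inv_inj (tog_inv i). Qed.


Lemma cnt_ext P Q : P =1 Q -> cnt P = cnt Q.
Proof. by move=> h; apply eq_bigr => S _; rewrite h. Qed.

Lemma cnt_flip P i : (forall S, P (tog i S) = P S) ->
  cnt (fun S => P S && (i \in S)) = cnt (fun S => P S && (i \notin S)).
Proof.
move=> hP; rewrite /cnt (reindex_inj (@tog_inj i)) /=.
by apply eq_bigr => S _; rewrite hP in_tog eqxx.
Qed.

Lemma cnt_split P i : (forall S, P (tog i S) = P S) ->
  cnt P = 2 * cnt (fun S => P S && (i \in S)).
Proof.
move=> hP.
have -> : cnt P = cnt (fun S => P S && (i \in S)) + cnt (fun S => P S && (i \notin S)).
  rewrite /cnt -big_split /=; apply eq_bigr => S _.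
  by case: (P S); case: (i \in S); rewrite /= ?addr0 ?add0r.
by rewrite -cnt_flip // mulr2n mulrDl mul1r.
Qed.

Lemma cnt_true : cnt (fun _ => true) = (2 ^ n)%:R.
Proof. by rewrite /cnt sumr_const card_sets. Qed.

Lemma cnt1 i : 2 * cnt (fun S => i \in S) = (2 ^ n)%:R.
Proof. by rewrite -cnt_true (@cnt_split (fun _ => true) i). Qed.

Lemma cnt2 i k : i != k -> 4 * cnt (fun S => (i \in S) && (k \in S)) = (2 ^ n)%:R.
Proof.
move=> nik; rewrite -(cnt1 i) (@cnt_split (fun S => i \in S) k).
  by rewrite mulrA; congr (_ * _); rewrite -natrM.
by move=> S; rewrite in_tog (negbTE nik).
Qed.

Lemma cnt3 i j : i != j -> 4 * cnt (fun S => (j \in S) && (i \notin S)) = (2 ^ n)%:R.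
Proof.
move=> nij; rewrite -cnt_flip; last by move=> S; rewrite in_tog eq_sym (negbTE nij).
rewrite -(cnt2 nij); congr (_ * _); apply: cnt_ext => S; exact: andbC.
Qed.

Local Notation A i j := (cre C i *m ann C j).
Local Notation P2 := ((2 ^ n)%:R : C).

Lemma cnt0 : cnt (fun _ => false) = 0.
Proof. by rewrite /cnt big1. Qed.

Lemma hs_AA_val (i j k l : 'I_n) : 4 * hs (A i j) (A k l) =
  P2 * (((i == k) && (j == l))%:R + ((i == j) && (k == l))%:R).
Proof.
rewrite hs_AA.
case: (eqVneq i k) => [<-|nik]; case: (eqVneq j l) => [<-|njl].
- case: (eqVneq i j) => [<-|nij].
  + rewrite (@cnt_ext _ (fun S => i \in S)); last first.
      by move=> S; rewrite setD11 /=; case: (i \in S).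
    by rewrite -(cnt1 i) /=; ring.
  + rewrite (@cnt_ext _ (fun S => (j \in S) && (i \notin S))); last first.
      move=> S; rewrite ?eqxx /= !inE nij /=.
      by case: (j \in S); case: (i \in S).
    by rewrite cnt3 // addr0 mulr1.
- rewrite /= add0r; case: (boolP ((i == j) && (i == l))) => [/andP[/eqP e1 /eqP e2]|hne].
  by case/eqP: njl; rewrite -e1 -e2.
  rewrite /= mulr0 (@cnt_ext _ (fun _ => false)) ?cnt0 ?mulr0 //.
  by move=> S; rewrite ?(negbTE hne) /= ?andbF.
- rewrite /= add0r; case: (boolP ((i == j) && (k == j))) => [/andP[/eqP e1 /eqP e2]|hne].
  by case/eqP: nik; rewrite e1 e2.
  rewrite /= mulr0 (@cnt_ext _ (fun _ => false)) ?cnt0 ?mulr0 //.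
  by move=> S; rewrite ?(negbTE hne) /= ?andbF.
- rewrite /= add0r; case: (boolP ((i == j) && (k == l))) => [/andP[/eqP e1 /eqP e2]|hne].
  subst; rewrite /= mulr1 (@cnt_ext _ (fun S => (j \in S) && (l \in S))).
    by rewrite cnt2.
  by move=> S; rewrite !setD11 /= !andbT; case: (j \in S); case: (l \in S).
  rewrite /= mulr0 (@cnt_ext _ (fun _ => false)) ?cnt0 ?mulr0 //.
  by move=> S; rewrite ?(negbTE hne) /= ?andbF.
Qed.

Lemma tr_A_val (i j : 'I_n) : 2 * \tr (A i j) = P2 * (i == j)%:R.
Proof.
rewrite tr_A -[\sum_(S : {set 'I_n}) _]/(cnt (fun S => (i == j) && (j \in S))).
case: (eqVneq i j) => [<-|nij] /=; first by rewrite cnt1 mulr1.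
by rewrite mulr0 /cnt big1 ?mulr0.
Qed.

Lemma adjmM (X Y : op) : adjm (X *m Y) = adjm Y *m adjm X.
Proof.
apply/matrixP => i j; rewrite !mxE rmorph_sum; apply eq_bigr => k _.
by rewrite !mxE rmorphM mulrC.
Qed.

Lemma adjmK (X : op) : adjm (adjm X) = X.
Proof. by apply/matrixP => i j; rewrite !mxE conjCK. Qed.

Lemma adjm1 : adjm (1%:M : op) = 1%:M.
Proof. by apply/matrixP => i j; rewrite !mxE eq_sym; case: (i == j); rewrite ?rmorph1 ?rmorph0. Qed.

Lemma adjmD (X Y : op) : adjm (X + Y) = adjm X + adjm Y.
Proof. by apply/matrixP => i j; rewrite !mxE rmorphD. Qed.

Lemma adjmZ a (X : op) : adjm (a *: X) = a^* *: adjm X.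
Proof. by apply/matrixP => i j; rewrite !mxE rmorphM. Qed.

Lemma hsDl (X Y Z : op) : hs (X + Y) Z = hs X Z + hs Y Z.
Proof. by rewrite /hs adjmD mulmxDl mxtraceD. Qed.

Lemma hsZl a (X Z : op) : hs (a *: X) Z = a^* * hs X Z.
Proof. by rewrite /hs adjmZ -scalemxAl mxtraceZ. Qed.

Lemma hs0l (Z : op) : hs 0 Z = 0.
Proof. by rewrite -(scale0r 0) hsZl rmorph0 mul0r. Qed.

Lemma hs_suml I (r : seq I) (F : I -> op) Z :
  hs (\sum_(i <- r) F i) Z = \sum_(i <- r) hs (F i) Z.
Proof. exact: (big_morph (fun X => hs X Z) (fun X Y => hsDl X Y Z) (hs0l Z)). Qed.

Lemma hsDr (X Y Z : op) : hs X (Y + Z) = hs X Y + hs X Z.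
Proof. by rewrite /hs mulmxDr mxtraceD. Qed.

Lemma hsZr a (X Z : op) : hs X (a *: Z) = a * hs X Z.
Proof. by rewrite /hs -scalemxAr mxtraceZ. Qed.

Lemma hs0r (Z : op) : hs Z 0 = 0.
Proof. by rewrite -(scale0r 0) hsZr mul0r. Qed.

Lemma hsNr (X Z : op) : hs X (- Z) = - hs X Z.
Proof. by rewrite -scaleN1r hsZr mulN1r. Qed.

Lemma hsBr (X Y Z : op) : hs X (Y - Z) = hs X Y - hs X Z.
Proof. by rewrite hsDr hsNr. Qed.

Lemma hs_sumr I (r : seq I) (F : I -> op) Z :
  hs Z (\sum_(i <- r) F i) = \sum_(i <- r) hs Z (F i).
Proof. exact: (big_morph (fun X => hs Z X) (fun X Y => hsDr Z X Y) (hs0r Z)). Qed.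

Lemma hs1 (Z : op) : hs 1%:M Z = \tr Z.
Proof. by rewrite /hs adjm1 mul1mx. Qed.

Lemma hsX1 (X : op) : hs X 1%:M = (\tr X)^*.
Proof.
rewrite /hs mulmx1 /mxtrace rmorph_sum; apply eq_bigr => i _; by rewrite mxE.
Qed.

Lemma orthO1 (Z : op) : hs 1%:M Z = 0 ->
  (forall i j, hs (A i j) Z = 0) ->
  (forall i j, hs (cre C i *m cre C j) Z = 0) ->
  (forall i j, hs (ann C i *m ann C j) Z = 0) ->
  forall b, inO1 b -> hs b Z = 0.
Proof.
move=> h1 hA hB hE b [a [B [D [E ->]]]].
rewrite !hsDl hsZl h1 mulr0 !hs_suml !big1 ?addr0 // => i _; rewrite hs_suml big1 // => j _;
  by rewrite hsZl ?hA ?hB ?hE mulr0.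
Qed.

Definition graded (d : int) (X : op) :=
  forall r s, X r s != 0 -> #|lbl r|%:Z = #|lbl s|%:Z + d.

Lemma graded_cre i : graded 1 (cre C i).
Proof.
move=> r s; rewrite creE; case: ifP => [/andP[hi /eqP ->] _|]; last by rewrite eqxx.
by rewrite cardsU1 hi; lia.
Qed.

Lemma graded_ann i : graded (-1) (ann C i).
Proof.
move=> r s; rewrite annE; case: ifP => [/andP[hi /eqP ->] _|]; last by rewrite eqxx.
by rewrite cardsU1 hi; lia.
Qed.

Lemma graded_mul d e (X Y : op) : graded d X -> graded e Y -> graded (d + e) (X *m Y).
Proof.
move=> hX hY r s; rewrite mxE => nz.
case: (pickP (fun t => X r t * Y t s != 0)) => [t ht | h0]; last first.
  by move: nz; rewrite big1 ?eqxx // => t _; apply/eqP/negbFE; rewrite h0.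
move: ht; rewrite mulf_eq0 negb_or => /andP[/hX -> /hY ->].
by rewrite addrAC -addrA.
Qed.

Lemma graded_add d (X Y : op) : graded d X -> graded d Y -> graded d (X + Y).
Proof.
move=> hX hY r s; rewrite mxE => nz.
case: (eqVneq (X r s) 0) => [h|]; last exact: hX.
by apply: hY; move: nz; rewrite h add0r.
Qed.

Lemma graded_scale d a (X : op) : graded d X -> graded d (a *: X).
Proof.
move=> hX r s; rewrite mxE mulf_eq0 negb_or => /andP[_]; exact: hX.
Qed.

Lemma graded_opp d (X : op) : graded d X -> graded d (- X).
Proof. by move=> h; rewrite -scaleN1r; apply: graded_scale. Qed.

Lemma graded0 d : graded d (0 : op).
Proof. by move=> r s; rewrite mxE eqxx. Qed.

Lemma graded_sum d I (r : seq I) (F : I -> op) :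
  (forall i, graded d (F i)) -> graded d (\sum_(i <- r) F i).
Proof.
move=> h; apply: (big_ind (graded d)); [exact: graded0 | exact: graded_add | by []].
Qed.

Lemma graded1 : graded 0 (1%:M : op).
Proof.
move=> r s; rewrite mxE; case: (eqVneq r s) => [->|]; last by rewrite eqxx.
by rewrite addr0.
Qed.

Lemma graded_A i j : graded 0 (A i j).
Proof. by have := graded_mul (@graded_cre i) (@graded_ann j); rewrite addrN. Qed.

Lemma graded_B i j : graded 2 (cre C i *m cre C j).
Proof. exact: graded_mul (@graded_cre i) (@graded_cre j). Qed.

Lemma graded_E i j : graded (-2) (ann C i *m ann C j).
Proof. exact: graded_mul (@graded_ann i) (@graded_ann j). Qed.

Lemma hs_graded d e (X Y : op) : graded d X -> graded e Y -> d != e -> hs X Y = 0.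
Proof.
move=> hX hY de; rewrite hsE big1 // => r _; rewrite big1 // => s _.
case: (eqVneq (X s r) 0) => [->|nx]; first by rewrite rmorph0 mul0r.
case: (eqVneq (Y s r) 0) => [->|ny]; first by rewrite mulr0.
move: (hX _ _ nx) (hY _ _ ny) => ->; move/addrI => ede.
by rewrite ede eqxx in de.
Qed.

Lemma NhatE r s : Nhat C n r s = if r == s then #|lbl s|%:R else 0.
Proof.
rewrite /Nhat summxE.
under eq_bigr => i _ do rewrite creannE setD11 /=.
case: (eqVneq r s) => [->|nrs].
  rewrite -sumr_const (bigID (fun i => i \in lbl s)) /= [X in _ + X]big1 ?addr0.
    by apply eq_bigr => i hi; rewrite hi setD1K // eqxx sg_sq.
  by move=> i /negbTE ->.
apply: big1 => i _; case: ifP => // /andP[/andP[hi _] /eqP E].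
by case/eqP: nrs; apply: lbl_inj; rewrite E setD1K.
Qed.

Lemma graded_rho (rho : op) : rho *m Nhat C n = Nhat C n *m rho -> graded 0 rho.
Proof.
move=> h r s nz; have := congr1 (fun M : op => M r s) h; rewrite /= !mxE.
rewrite (bigD1 s) //= big1 ?addr0; last by move=> t nts; rewrite NhatE (negbTE nts) mulr0.
rewrite [in X in _ = X](bigD1 r) //= big1 ?addr0; last first.
  by move=> t ntr; rewrite NhatE eq_sym (negbTE ntr) mul0r.
rewrite !NhatE !eqxx => /eqP.
rewrite mulrC -subr_eq0 -mulrBl mulf_eq0 (negbTE nz) orbF subr_eq0 eqr_nat => /eqP ->.
by [].
Qed.

Lemma hs_p (X : op) (g : 'M[C]_n) :
  hs X (P2^-1 *: ((n%:R + 1 - 2 * \tr g) *: 1%:M - 2 *: Nhat C n + 4 *: dGamma g)) =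
  P2^-1 * ((n%:R + 1 - 2 * \tr g) * hs X 1%:M - 2 * \sum_k hs X (A k k)
     + 4 * \sum_k \sum_l g k l * hs X (A k l)).
Proof.
rewrite hsZr hsDr hsBr !hsZr /Nhat /dGamma !hs_sumr; congr (_ * (_ + _ * _)).
by apply eq_bigr => k _; rewrite hs_sumr; apply eq_bigr => l _; rewrite hsZr.
Qed.

Lemma P2_neq0 : P2 != 0.
Proof. by rewrite pnatr_eq0 expn_eq0. Qed.

Lemma sum_delta2 (i j : 'I_n) :
  \sum_(k < n) ((i == k) && (j == k))%:R = (i == j)%:R :> C.
Proof.
rewrite (bigD1 i) //= big1 ?addr0; first by rewrite eqxx /= eq_sym.
by move=> k nki; rewrite eq_sym (negbTE nki).
Qed.

Lemma sum_gdelta (g : 'M[C]_n) (i j : 'I_n) :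
  \sum_(k < n) \sum_(l < n) g k l * ((i == k) && (j == l))%:R = g i j.
Proof.
rewrite (bigD1 i) //= [X in _ + X]big1 ?addr0; last first.
  by move=> k nki; rewrite big1 // => l _; rewrite eq_sym (negbTE nki) mulr0.
rewrite (bigD1 j) //= [X in _ + X]big1 ?addr0; first by rewrite !eqxx mulr1.
by move=> l nlj; rewrite eq_sym (negbTE nlj) andbF mulr0.
Qed.

Lemma hs_A_p (g : 'M[C]_n) (i j : 'I_n) :
  hs (A i j) (P2^-1 *: ((n%:R + 1 - 2 * \tr g) *: 1%:M - 2 *: Nhat C n + 4 *: dGamma g))
  = g i j.
Proof.
rewrite hs_p.
set d : C := (i == j)%:R.
have h1 : hs (A i j) 1%:M = P2 * d / 2.
  rewrite hsX1; apply: (@mulfI _ 2 (_ : (2:C) != 0)); first by rewrite pnatr_eq0.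
  rewrite mulrCA divff ?mulr1 ?pnatr_eq0 //.
  have := congr1 Num.conj (tr_A_val i j); rewrite rmorphM /= rmorph_nat => ->.
  by rewrite rmorphM /= !rmorph_nat.
have hS1 : \sum_k hs (A i j) (A k k) = P2 * (d + n%:R * d) / 4.
  apply: (@mulfI _ 4 (_ : (4:C) != 0)); first by rewrite pnatr_eq0.
  rewrite mulrCA divff ?mulr1 ?pnatr_eq0 // mulr_sumr.
  under eq_bigr => k _ do rewrite hs_AA_val eqxx !andbT.
  rewrite -mulr_sumr big_split /= sum_delta2 sumr_const card_ord /d.
  by case: (i == j); rewrite /= ?mulr1 ?mulr0 ?mul0rn ?addr0 // -mulr_natl mulr1.
have hS2 : \sum_k \sum_l g k l * hs (A i j) (A k l) = P2 * (g i j + d * \tr g) / 4.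
  apply: (@mulfI _ 4 (_ : (4:C) != 0)); first by rewrite pnatr_eq0.
  rewrite mulrCA divff ?mulr1 ?pnatr_eq0 // mulr_sumr.
  transitivity (P2 * \sum_k \sum_l g k l * (((i == k) && (j == l))%:R
     + ((i == j) && (k == l))%:R)).
    rewrite !mulr_sumr; apply eq_bigr => k _; rewrite !mulr_sumr; apply eq_bigr => l _.
    by rewrite mulrCA hs_AA_val mulrCA.
  have -> : \sum_k \sum_l g k l * (((i == k) && (j == l))%:R + ((i == j) && (k == l))%:R)
     = \sum_k \sum_l g k l * ((i == k) && (j == l))%:R
     + \sum_k \sum_l g k l * ((i == j) && (k == l))%:R.
    rewrite -big_split; apply eq_bigr => k _; rewrite -big_split; apply eq_bigr => l _.
    by rewrite mulrDr.
  rewrite sum_gdelta; congr (_ * (_ + _)).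
  rewrite /d /mxtrace; case: (i == j) => /=; last first.
    by rewrite mul0r big1 // => k _; rewrite big1 // => l _; rewrite mulr0.
  rewrite mul1r; apply eq_bigr => k _.
  rewrite (bigD1 k) //= big1 ?addr0 ?eqxx ?mulr1 //.
  by move=> l nlk; rewrite eq_sym (negbTE nlk) mulr0.
rewrite h1 hS1 hS2.
field; rewrite P2_neq0 ?pnatr_eq0 //.
Qed.

Lemma hs_1_p (g : 'M[C]_n) :
  hs 1%:M (P2^-1 *: ((n%:R + 1 - 2 * \tr g) *: 1%:M - 2 *: Nhat C n + 4 *: dGamma g))
  = 1.
Proof.
rewrite hs_p.
have h2 : (2 : C) != 0 by rewrite pnatr_eq0.
have hA : forall k l : 'I_n, hs 1%:M (A k l) = P2 * (k == l)%:R / 2.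
  move=> k l; rewrite hs1 -(tr_A_val k l) mulrC mulKf //.
have -> : hs (1%:M : op) 1%:M = P2 by rewrite hs1 mxtrace1 /fdim card_sets.
have -> : \sum_(k < n) hs (1%:M : op) (A k k) = n%:R * P2 / 2.
  under eq_bigr => k _ do rewrite hA eqxx mulr1.
  by rewrite sumr_const card_ord -mulrA [RHS]mulr_natl.
have -> : \sum_(k < n) \sum_(l < n) g k l * hs (1%:M : op) (A k l) = P2 * \tr g / 2.
  rewrite /mxtrace mulr_sumr mulr_suml; apply eq_bigr => k _.
  rewrite (bigD1 k) //= big1 ?addr0.
    by rewrite hA eqxx mulr1; field.
  by move=> l nlk; rewrite hA eq_sym (negbTE nlk) mulr0 mul0r mulr0.
field; rewrite P2_neq0 //.
Qed.

Lemma graded_p (g : 'M[C]_n) :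
  graded 0 (P2^-1 *: ((n%:R + 1 - 2 * \tr g) *: 1%:M - 2 *: Nhat C n + 4 *: dGamma g)).
Proof.
apply: graded_scale; apply: graded_add; first apply: graded_add.
- exact: graded_scale graded1.
- apply: graded_opp; apply: graded_scale; apply: graded_sum => k; exact: graded_A.
- apply: graded_scale; apply: graded_sum => k; apply: graded_sum => l.
  apply: graded_scale; exact: graded_A.
Qed.

Lemma p_inO1 (g : 'M[C]_n) :
  inO1 (P2^-1 *: ((n%:R + 1 - 2 * \tr g) *: 1%:M - 2 *: Nhat C n + 4 *: dGamma g)).
Proof.
exists (P2^-1 * (n%:R + 1 - 2 * \tr g)),
  (\matrix_(i, j) (P2^-1 * (4 * g i j - 2 * (i == j)%:R))), 0, 0.
have z : forall F : 'I_n -> 'I_n -> op, \sum_i \sum_j (0 : 'M[C]_n) i j *: F i j = 0.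
  by move=> F; apply: big1 => i _; apply: big1 => j _; rewrite mxE scale0r.
rewrite !z !addr0 scalerDr scalerBr !scalerA -!addrA; congr (_ + _).
have hN : Nhat C n = \sum_i \sum_j (i == j)%:R *: A i j.
  rewrite /Nhat; apply eq_bigr => i _; rewrite (bigD1 i) //= big1 ?addr0 ?eqxx ?scale1r //.
  by move=> j nji; rewrite eq_sym (negbTE nji) scale0r.
rewrite hN /dGamma addrC !scaler_sumr -sumrB; apply eq_bigr => i _.
rewrite !scaler_sumr -sumrB; apply eq_bigr => j _.
by rewrite mxE !scalerA -scalerBl; congr (_ *: _); ring.
Qed.

Lemma hs_A_rho (rho : op) i j : hs (A i j) rho = gam rho i j.
Proof.
rewrite /hs adjmM /ann adjmK mxE.
change (adjm (cre C i)) with (ann C i).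
by rewrite mxtrace_mulC.
Qed.
End S.

Unset Implicit Arguments.
Set Strict Implicit.
Set Printing Implicit Defensive.

Theorem corollary1p2 (C : numClosedFieldType) (n : nat) (rho : op C n) :
  density rho ->
  rho *m Nhat C n = Nhat C n *m rho ->
  is_orth_proj (@inO1 C n) rho
    ((2 ^ n)%:R^-1 *:
       ((n%:R + 1 - 2 * \tr (gam rho)) *: 1%:M
        - 2 *: Nhat C n
        + 4 *: dGamma (gam rho))).
Proof.
move=> [_ htr] hcomm; split; first exact: p_inO1.
move=> b hb; apply: (orthO1 _ _ _ _ hb).
- by rewrite hsBr hs1 htr hs_1_p subrr.
- by move=> i j; rewrite hsBr hs_A_rho hs_A_p subrr.
- move=> i j; apply: (hs_graded (@graded_B C n i j)).
    exact: graded_add (graded_rho hcomm) (graded_opp (@graded_p C n _)).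
  by [].
- move=> i j; apply: (hs_graded (@graded_E C n i j)).
    exact: graded_add (graded_rho hcomm) (graded_opp (@graded_p C n _)).
  by [].
Qed.
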